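(* Assume (R) and let $n\ge1$ be odd. For all integers $k$ with $(n+1)/2\le k\le n$: $$\sum_{\nu=0}^{k}\binom{2k-n}{k-\nu}s_{n,\nu}=0,\qquad \sum_{\nu=0}^{k}\binom{2k-n}{k-\nu}\binom{n}{\nu}\alpha_{n-\nu,\nu}=0,\qquad \sum_{\nu=0}^{k}\binom{2k-\nu}{k}\binom{n}{\nu}\alpha_{n-\nu}=0.$$
   Context: Let $(\alpha_n)_{n\ge0}$ be an arbitrary sequence of complex numbers with Appell polynomials $A_n(x)=\sum_{\nu=0}^{n}\binom{n}{\nu}\alpha_{n-\nu}x^\nu$; property (R) means $A_n(1-x)=(-1)^nA_n(x)$ for all $n\ge0$. Let $s_{n,k}=\sum_{\nu=k}^{n}\binom{n}{\nu}\binom{\nu}{k}\alpha_\nu$ for $0\le k\le n$ (and $s_{n,\nu}=0$ for $\nu>n$), and $\alpha_{r,s}=\sum_{\nu=0}^{r}\binom{r}{\nu}\alpha_{s+\nu}$ for $r,s\ge0$. Binomial coefficients $\binom{m}{j}$ with integer $m$ are the usual generalized ones, zero for $j<0$. *)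

(* Defs.v *)
From HB Require Import structures.
From mathcomp Require Import all_boot all_order all_algebra.
From mathcomp Require Import complex.
From mathcomp Require Import reals.
Set Implicit Arguments. Unset Strict Implicit. Unset Printing Implicit Defensive.
Import Order.TTheory GRing.Theory Num.Theory.
Local Open Scope ring_scope.

Section Appell.
Variable C : comRingType.

Definition appellA (alpha : nat -> C) (n : nat) (x : C) : C :=
  \sum_(nu < n.+1) 'C(n, nu)%:R * alpha (n - nu)%N * x ^+ nu.

Definition propR (alpha : nat -> C) : Prop :=
  forall (n : nat) (x : C), appellA alpha n (1 - x) = (-1) ^+ n * appellA alpha n x.

Definition s_nk (alpha : nat -> C) (n k : nat) : C :=
  \sum_(k <= nu < n.+1) 'C(n, nu)%:R * 'C(nu, k)%:R * alpha nu.

Definition alpha_rs (alpha : nat -> C) (r s : nat) : C :=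
  \sum_(nu < r.+1) 'C(r, nu)%:R * alpha (s + nu)%N.
End Appell.

(* Main.v *)
Require Import Defs.
From HB Require Import structures.
From mathcomp Require Import all_boot all_order all_algebra.
From mathcomp Require Import complex.
From mathcomp Require Import reals.
From mathcomp Require Import zify ring.
Import Order.TTheory GRing.Theory Num.Theory.
Local Open Scope ring_scope.
Set Implicit Arguments. Unset Strict Implicit.

Lemma sum_trunc (C : nmodType) (N M : nat) (F : nat -> C) :
  (M <= N)%N -> (forall i, (M <= i)%N -> F i = 0) ->
  \sum_(i < N) F i = \sum_(i < M) F i.
Proof.
move=> MN H; rewrite -(subnKC MN) big_split_ord /=.
rewrite [X in _ + X]big1 ?addr0 // => i _.
by apply: H; rewrite leq_addr.
Qed.

Lemma binMM n a b : (a + b <= n)%N ->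
  ('C(n, a) * 'C(n - a, b) = 'C(n, a + b) * 'C(a + b, a))%N.
Proof.
move=> h.
have hp : (0 < a`! * b`! * (n - (a + b))`!)%N by rewrite !muln_gt0 !fact_gt0.
apply/eqP; rewrite -(eqn_pmul2r hp); apply/eqP.
have e1 : ('C(n - a, b) * (b`! * (n - (a + b))`!) = (n - a)`!)%N.
  by rewrite subnDA bin_fact //; lia.
have e2 : ('C(a + b, a) * (a`! * b`!) = (a + b)`!)%N.
  by have := bin_fact (n:=a+b) (m:=a); rewrite addKn; apply; lia.
transitivity ('C(n, a) * (a`! * (n - a)`!))%N.
  by rewrite -e1; ring.
transitivity ('C(n, a + b) * ((a + b)`! * (n - (a + b))`!))%N; last first.
  by rewrite -e2; ring.
by rewrite !bin_fact //; lia.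
Qed.

Section Gen.
Variable C : comNzRingType.
Variable b : nat -> C.

Definition LL (N : nat) (p : {poly C}) := \sum_(i < N) p`_i * b i.

Lemma LL_sum N (I : Type) (r : seq I) (P : pred I) (F : I -> {poly C}) :
  LL N (\sum_(j <- r | P j) F j) = \sum_(j <- r | P j) LL N (F j).
Proof.
rewrite /LL; under eq_bigr do rewrite coef_sum mulr_suml.
exact: exchange_big.
Qed.

Lemma LL_scale N c p : LL N (c *: p) = c * LL N p.
Proof. by rewrite /LL mulr_sumr; apply: eq_bigr => i _; rewrite coefZ mulrA. Qed.

Lemma LL_opp N p : LL N (- p) = - LL N p.
Proof. by rewrite /LL -sumrN; apply: eq_bigr => i _; rewrite coefN mulNr. Qed.

Lemma coef1X m i : ((1 + 'X) ^+ m)`_i = ('C(m, i))%:R :> C.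
Proof.
elim: m i => [|m IH] i.
  by rewrite expr0 coef1; case: i.
rewrite exprS mulrDl mul1r coefD coefXM IH; case: i => [|i] /=.
  by rewrite !bin0 addr0.
by rewrite IH binS natrD.
Qed.

Hypothesis hE : forall m, \sum_(j < m.+1) ('C(m, j))%:R * b j = (-1) ^+ m * b m.

Lemma LL_1X N m : (m < N)%N -> LL N ((1 + 'X) ^+ m) = (-1) ^+ m * b m.
Proof.
move=> mN; rewrite /LL -hE.
under eq_bigr do rewrite coef1X.
apply: (@sum_trunc _ N m.+1 (fun i => ('C(m, i))%:R * b i)) => // i hi.
by rewrite bin_small ?mul0r.
Qed.

Lemma LL_size N (p : {poly C}) : (size p <= N)%N -> LL N p = \sum_(i < size p) p`_i * b i.
Proof.
move=> h; apply: (@sum_trunc _ N (size p) (fun i => p`_i * b i)) => // i hi.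
by rewrite nth_default ?mul0r.
Qed.

Lemma LL_comp N (p : {poly C}) : (size p <= N)%N -> LL N (p \Po (-1 - 'X)) = LL N p.
Proof.
move=> h; rewrite comp_polyE LL_sum (LL_size h); apply: eq_bigr => i _.
have -> : (-1 - 'X : {poly C}) = - (1 + 'X) by rewrite opprD.
rewrite exprNn -polyCN -polyC_exp mul_polyC !LL_scale LL_1X; last first.
  by apply: leq_trans h; rewrite ltn_ord.
by rewrite [_ * (_ * b i)]mulrA -expr2 sqrr_sign mul1r.
Qed.
End Gen.

Section Main.
Variable C : comNzRingType.
Variable b : nat -> C.
Variables n k : nat.

Definition cn nu := if (nu <= k)%N then 'C(2 * k - n, k - nu) else 0%N.
Definition ee nu : C := (cn nu * 'C(n, nu))%:R.
Definition TT nu : {poly C} := 'X^nu * (1 + 'X) ^+ (n - nu).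
Definition QQ : {poly C} := \sum_(nu < n.+1) ee nu *: TT nu.

Lemma coefT nu i : (TT nu)`_i = if (i < nu)%N then 0 else ('C(n - nu, i - nu))%:R.
Proof. by rewrite /TT coefXnM coef1X. Qed.

Lemma size_QQ : (size QQ <= n.+1)%N.
Proof.
apply/leq_sizeP => j hj; rewrite coef_sum big1 // => nu _.
rewrite coefZ coefT; case: ifP => _; first by rewrite mulr0.
by rewrite bin_small ?mulr0 //; have := ltn_ord nu; lia.
Qed.

Lemma LT nu : (nu <= n)%N -> LL b n.+1 (TT nu) = alpha_rs b (n - nu) nu.
Proof.
move=> hn; rewrite /LL -(big_mkord xpredT (fun i => (TT nu)`_i * b i)).
rewrite (big_cat_nat (n:=nu) (leq0n nu)) /=; last by lia.
rewrite big_nat_cond big1 ?add0r; last first.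
  by move=> i /andP [/andP [_ hi] _]; rewrite coefT hi mul0r.
rewrite -{1}(add0n nu) big_addn big_mkord /alpha_rs subSn //.
apply: eq_bigr => i _; rewrite coefT ltnNge leq_addl /= addnK addnC.
by [].
Qed.

Lemma Snk nu : (nu <= n)%N -> s_nk b n nu = ('C(n, nu))%:R * alpha_rs b (n - nu) nu.
Proof.
move=> hn; rewrite /s_nk -{1}(add0n nu) big_addn big_mkord /alpha_rs subSn //.
rewrite mulr_sumr; apply: eq_bigr => i _.
have hi : (nu + i <= n)%N by have := ltn_ord i; lia.
by rewrite [RHS]mulrA -[in RHS]natrM binMM // (addnC nu i) natrM.
Qed.

Lemma Snk_full nu : (nu <= n)%N ->
  s_nk b n nu = \sum_(i < n.+1) ('C(n, i))%:R * ('C(i, nu))%:R * b i.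
Proof.
move=> hn; rewrite -(big_mkord xpredT (fun i => ('C(n, i))%:R * ('C(i, nu))%:R * b i)).
rewrite (big_cat_nat (n:=nu) (leq0n nu)) /=; last by lia.
rewrite big_nat_cond big1 ?add0r //.
by move=> i /andP [/andP [_ hi] _]; rewrite (bin_small hi) mulr0 mul0r.
Qed.

Hypothesis hodd : odd n.
Hypothesis h2k : (n <= 2 * k)%N.
Hypothesis hkn : (k <= n)%N.

Lemma cn_sym nu : (nu <= n)%N -> cn (n - nu) = cn nu.
Proof.
move=> hn; rewrite /cn; case: (leqP (n - nu) k) => h1; case: (leqP nu k) => h2.
- rewrite -bin_sub; last by lia.
  by congr 'C(_, _); lia.
- by rewrite bin_small //; lia.
- by rewrite bin_small //; lia.
- by lia.
Qed.

Lemma ee_sym nu : (nu <= n)%N -> ee (n - nu) = ee nu.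
Proof. by move=> hn; rewrite /ee cn_sym // bin_sub. Qed.

Lemma QQsym : QQ \Po (-1 - 'X) = - QQ.
Proof.
rewrite /QQ raddf_sum /= -sumrN.
rewrite [LHS](reindex_inj rev_ord_inj) /=.
apply: eq_bigr => nu _.
have hn : (nu <= n)%N by have := ltn_ord nu; lia.
rewrite subSS ee_sym // comp_polyZ -scalerN; congr (_ *: _).
rewrite /TT subKn // comp_polyM !rmorphXn /= comp_polyX comp_polyD rmorph1 comp_polyX.
have -> : (1 + (-1 - 'X) : {poly C}) = - 'X by rewrite addrA subrr add0r.
have -> : (-1 - 'X : {poly C}) = - (1 + 'X) by rewrite opprD.
rewrite (exprNn (1 + 'X)) (exprNn 'X) mulrACA -exprD subnK // -signr_odd hodd expr1 mulN1r.
by rewrite mulrC.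
Qed.
End Main.

Lemma E_of_propR (C : comNzRingType) (alpha : nat -> C) : propR alpha ->
  forall m, \sum_(j < m.+1) ('C(m, j))%:R * alpha j = (-1) ^+ m * alpha m.
Proof.
move=> hR m; have := hR m 0; rewrite subr0.
have -> : appellA alpha m 0 = alpha m.
  rewrite /appellA big_ord_recl big1 ?addr0; last first.
    by move=> i _; rewrite expr0n /= mulr0.
  by rewrite bin0 subn0 expr0 !mul1r mulr1.
move=> <-; rewrite /appellA (reindex_inj rev_ord_inj) /=.
apply: eq_bigr => i _; have hi := ltn_ord i.
rewrite subSS bin_sub ?subKn // ?expr1n ?mulr1 //; lia.
Qed.

Section Final.
Variable C : numDomainType.
Variable b : nat -> C.
Hypothesis hE : forall m, \sum_(j < m.+1) ('C(m, j))%:R * b j = (-1) ^+ m * b m.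
Variables n k : nat.
Hypothesis hodd : odd n.
Hypothesis h2k : (n <= 2 * k)%N.
Hypothesis hkn : (k <= n)%N.

Lemma LQ0 : LL b n.+1 (QQ C n k) = 0.
Proof.
have h : LL b n.+1 (QQ C n k) = - LL b n.+1 (QQ C n k).
  by rewrite -LL_opp -(QQsym C hodd h2k hkn) (LL_comp hE) // size_QQ.
have h2 : LL b n.+1 (QQ C n k) *+ 2 == 0 by rewrite mulr2n {1}h addNr.
by move: h2; rewrite mulrn_eq0 /= => /eqP.
Qed.

Lemma I1 : \sum_(nu < k.+1) ('C(2 * k - n, k - nu))%:R * s_nk b n nu = 0.
Proof.
transitivity (LL b n.+1 (QQ C n k)); last exact: LQ0.
rewrite /QQ LL_sum.
under [RHS]eq_bigr do rewrite LL_scale.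
rewrite (@sum_trunc _ n.+1 k.+1 (fun nu => ee C n k nu * LL b n.+1 (TT C n nu))) //; last first.
  by move=> i hi; rewrite /ee /cn leqNgt hi /= mul0r.
apply: eq_bigr => nu _; have hi := ltn_ord nu.
rewrite (LT b); last by lia.
rewrite (Snk b); last by lia.
by rewrite /ee /cn -ltnS hi natrM mulrA.
Qed.

Lemma I2 : \sum_(nu < k.+1) ('C(2 * k - n, k - nu))%:R * ('C(n, nu))%:R
                           * alpha_rs b (n - nu) nu = 0.
Proof.
transitivity (\sum_(nu < k.+1) ('C(2 * k - n, k - nu))%:R * s_nk b n nu); last exact: I1.
apply: eq_bigr => nu _; have hi := ltn_ord nu.
by rewrite (Snk b) ?mulrA //; lia.
Qed.

Lemma I3 : \sum_(nu < k.+1) ('C(2 * k - nu, k))%:R * ('C(n, nu))%:R * b (n - nu)%N = 0.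
Proof.
transitivity (\sum_(nu < k.+1) ('C(2 * k - n, k - nu))%:R * s_nk b n nu); last exact: I1.
transitivity (\sum_(i < n.+1) ('C(n, i))%:R * ('C(i + (2 * k - n), k))%:R * b i :> C).
  rewrite -(@sum_trunc _ n.+1 k.+1 (fun nu => ('C(2 * k - nu, k))%:R * ('C(n, nu))%:R * b (n - nu)%N)) //; last first.
    by move=> i hi; rewrite bin_small ?mul0r //; lia.
  rewrite [RHS](reindex_inj rev_ord_inj) /=.
  apply: eq_bigr => i _; have hi := ltn_ord i.
  rewrite subSS bin_sub; last by lia.
  have -> : (n - i + (2 * k - n) = 2 * k - i)%N by lia.
  by rewrite [('C(n, i))%:R * _]mulrC.
symmetry.
transitivity (\sum_(nu < k.+1) \sum_(i < n.+1)
   ('C(2 * k - n, k - nu))%:R * (('C(n, i))%:R * ('C(i, nu))%:R * b i) :> C).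
  apply: eq_bigr => nu _; have hi := ltn_ord nu.
  by rewrite (Snk_full b) ?mulr_sumr //; lia.
rewrite exchange_big /=; apply: eq_bigr => i _.
rewrite -binomial.Vandermonde natr_sum mulr_sumr mulr_suml; apply: eq_bigr => nu _.
rewrite natrM; ring.
Qed.
End Final.

Theorem mainTheorem18 (R : realType) (alpha : nat -> R[i]) :
  propR alpha ->
  forall n : nat, (0 < n)%N -> odd n ->
  forall k : nat, ((n.+1)./2 <= k)%N -> (k <= n)%N ->
    [/\ \sum_(nu < k.+1) 'C(2 * k - n, k - nu)%:R * s_nk alpha n nu = 0,
        \sum_(nu < k.+1) 'C(2 * k - n, k - nu)%:R * 'C(n, nu)%:R
                           * alpha_rs alpha (n - nu) nu = 0
      & \sum_(nu < k.+1) 'C(2 * k - nu, k)%:R * 'C(n, nu)%:R * alpha (n - nu)%N = 0].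
Proof.
move=> hR n _ hodd k hk hkn.
have hE := E_of_propR hR.
have h2k : (n <= 2 * k)%N.
  by move: hk; rewrite -(odd_double_half n) hodd; lia.
split.
- exact: I1.
- exact: I2.
- exact: I3.
Qed.
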